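(* Let $n\ge 1$, $\bar\gamma=(\gamma_1,\dots,\gamma_n)\in\mathbb{N}^n$, and let $s_1,\dots,s_n$ be i.i.d. with $\Pr[s_i=k]=2^{-(k+1)}$ for $k\ge 0$; let $A(\bar\gamma)$ be the event that the closed intervals $[s_i,s_i+\gamma_i]$ are pairwise disjoint. Then $$\Pr[A(\bar\gamma)]=c(n)\cdot 2^{-\binom{n+1}{2}}\sum_{\sigma\in\mathrm{Sym}_n}\prod_{i=1}^{n-1}2^{-(n-i)\gamma_{\sigma(i)}},$$ where $c(n)=2\big/\prod_{i=1}^{n-1}(1-2^{-(n+1-i)})$ satisfies $c(n)\in[2,4]$ for all $n$, and $c(2)=8/3$.
   Context: $\mathbb{N}=\{0,1,2,\dots\}$; $\mathrm{Sym}_n$ is the set of all permutations of $\{1,\dots,n\}$. *)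

(* Defs.v *)
From HB Require Import structures.
From mathcomp Require Import all_boot all_order all_algebra all_fingroup.
Set Implicit Arguments. Unset Strict Implicit. Unset Printing Implicit Defensive.
Import Order.TTheory GRing.Theory Num.Theory.
Local Open Scope ring_scope.

Definition converges_to (u : nat -> rat) (l : rat) : Prop :=
  forall eps : rat, 0 < eps ->
    exists N : nat, forall M : nat, (N <= M)%N -> `|u M - l| < eps.

Definition intervals_disjoint (n : nat) (gamma : 'I_n -> nat) (s : 'I_n -> nat) : bool :=
  [forall i : 'I_n, forall j : 'I_n,
     (i != j) ==> ((s i + gamma i < s j)%N || (s j + gamma j < s i)%N)].

Definition mass (n : nat) (s : 'I_n -> nat) : rat :=
  \prod_(i : 'I_n) (2%:R : rat) ^- (s i).+1.

(* Partial sum of Pr[A(gamma)] over outcomes with all s_i < N.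
   Pr[A(gamma)] is the limit of these partial sums as N -> infinity. *)
Definition probA_partial (n : nat) (gamma : 'I_n -> nat) (N : nat) : rat :=
  \sum_(s : {ffun 'I_n -> 'I_N} | intervals_disjoint gamma (fun i => nat_of_ord (s i)))
     mass (fun i => nat_of_ord (s i)).

Definition c (n : nat) : rat :=
  2%:R / \prod_(1 <= i < n) (1 - (2%:R : rat) ^- (n.+1 - i)).

(* Main.v *)
Require Import Defs.
From HB Require Import structures.
From Stdlib Require Import FunctionalExtensionality.
From mathcomp Require Import all_boot all_order all_algebra all_fingroup.
Set Implicit Arguments. Unset Strict Implicit. Unset Printing Implicit Defensive.
Import Order.TTheory GRing.Theory Num.Theory.
Local Open Scope ring_scope.

Definition pos (m : nat) (g : 'I_m.+1 -> nat) (sg : {perm 'I_m.+1})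
  (e : 'I_m.+1 -> nat) (k : nat) : nat :=
  (\sum_(0 <= j < k.+1) e (inord j) + \sum_(0 <= j < k) (g (sg (inord j))).+1)%N.

Definition Phi (m : nat) (g : 'I_m.+1 -> nat) (sg : {perm 'I_m.+1})
  (e : 'I_m.+1 -> nat) : 'I_m.+1 -> nat := fun i => pos g sg e (sg^-1 i)%g.

Lemma pos_rec m (g : 'I_m.+1 -> nat) sg (e : 'I_m.+1 -> nat) k : pos g sg e k.+1 =
  (pos g sg e k + (g (sg (inord k))).+1 + e (inord k.+1))%N.
Proof.
have E1 : (\sum_(0 <= j < k.+2) e (inord j) = \sum_(0<=j<k.+1) e (inord j) + e (inord k.+1))%N.
  by rewrite big_nat_recr.
have E2 : (\sum_(0 <= j < k.+1) (g (sg (inord j))).+1 = \sum_(0<=j<k) (g (sg (inord j))).+1 + (g (sg (inord k))).+1)%N.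
  by rewrite big_nat_recr.
rewrite /pos E1 E2.
by rewrite addnACA -addnA [(e _ + _)%N]addnC !addnA.
Qed.

Lemma pos_gap m (g : 'I_m.+1 -> nat) sg (e : 'I_m.+1 -> nat) k l : (k < l)%N ->
  (pos g sg e k + (g (sg (inord k))).+1 <= @pos m g sg e l)%N.
Proof.
elim: l => // l IH; rewrite ltnS leq_eqVlt => /orP [/eqP -> | /IH H].
  by rewrite pos_rec leq_addr.
by rewrite pos_rec; apply: leq_trans H _; rewrite -addnA leq_addr.
Qed.

Lemma pos_lt m (g : 'I_m.+1 -> nat) sg (e : 'I_m.+1 -> nat) k l : (k < l)%N -> (pos g sg e k < @pos m g sg e l)%N.
Proof. by move=> H; apply: leq_trans (pos_gap g sg e H); rewrite addnS ltnS leq_addr. Qed.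

Lemma pos_ltE m (g : 'I_m.+1 -> nat) sg (e : 'I_m.+1 -> nat) k l : (pos g sg e k < @pos m g sg e l)%N = (k < l)%N.
Proof.
case: (ltngtP k l) => [H|H|->]; first by rewrite pos_lt.
  by apply/negbTE; rewrite -leqNgt ltnW // pos_lt.
by rewrite ltnn.
Qed.

Lemma Phi_disj m (g : 'I_m.+1 -> nat) sg (e : 'I_m.+1 -> nat) : intervals_disjoint g (@Phi m g sg e).
Proof.
apply/forallP => i; apply/forallP => j; apply/implyP => ij.
rewrite /Phi.
have: (sg^-1 i)%g != (sg^-1 j)%g by rewrite (inj_eq (@perm_inj _ _)).
rewrite neq_ltn => /orP [] H; apply/orP; [left|right].
  by have := pos_gap g sg e H; rewrite inord_val permKV addnS.
by have := pos_gap g sg e H; rewrite inord_val permKV addnS.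
Qed.

Definition rank m (s : 'I_m.+1 -> nat) (i : 'I_m.+1) : nat :=
  #|[set j | (s j < s i)%N]|.

Lemma rank_lt m (s : 'I_m.+1 -> nat) i : (@rank m s i < m.+1)%N.
Proof.
rewrite /rank; apply: (@leq_trans #|[set: 'I_m.+1]|); last by rewrite cardsT card_ord.
apply: proper_card.
apply/properP; split; first exact: subsetT.
by exists i; rewrite ?inE ?ltnn.
Qed.

Lemma rank_mono m (s : 'I_m.+1 -> nat) i j : (s i < s j)%N -> (rank s i < rank s j)%N.
Proof.
move=> H; apply: proper_card; apply/properP; split.
  by apply/subsetP => x; rewrite !inE => /ltn_trans; apply.
by exists i; rewrite !inE ?ltnn.
Qed.

Lemma sortP m (s : 'I_m.+1 -> nat) : injective s ->
  exists sg : {perm 'I_m.+1}, forall k l : 'I_m.+1, (k < l)%N -> (s (sg k) < s (sg l))%N.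
Proof.
move=> sinj.
pose rk i : 'I_m.+1 := Ordinal (rank_lt s i).
have rk_inj : injective rk.
  move=> i j /(congr1 val) /= E; apply: sinj.
  case: (ltngtP (s i) (s j)) => // H.
    by have := rank_mono H; rewrite E ltnn.
  by have := rank_mono H; rewrite E ltnn.
exists (perm rk_inj)^-1%g => k l kl.
have rE x : rank s ((perm rk_inj)^-1%g x) = x.
  by have := permKV (perm rk_inj) x; rewrite permE => /(congr1 val).
case: (ltngtP (s ((perm rk_inj)^-1%g k)) (s ((perm rk_inj)^-1%g l))) => // H.
  by have := rank_mono H; rewrite !rE => /(ltn_trans kl); rewrite ltnn.
have /perm_inj E : (perm rk_inj)^-1%g k = (perm rk_inj)^-1%g l by apply: sinj.
by move: kl; rewrite E ltnn.
Qed.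

Lemma disj_gap m (g : 'I_m.+1 -> nat) (s : 'I_m.+1 -> nat) i j :
  intervals_disjoint g s -> i != j -> ((s i + g i < s j) || (s j + g j < s i))%N.
Proof. by move=> /forallP /(_ i) /forallP /(_ j) /implyP; apply. Qed.

Lemma disj_inj m (g : 'I_m.+1 -> nat) (s : 'I_m.+1 -> nat) :
  intervals_disjoint g s -> injective s.
Proof.
move=> D i j E; apply/eqP; apply/negPn/negP => ij.
have := disj_gap D ij; rewrite E => /orP [] H.
  by have := leq_ltn_trans (leq_addr _ _) H; rewrite ltnn.
by have := leq_ltn_trans (leq_addr _ _) H; rewrite ltnn.
Qed.

Definition Ed m (g : 'I_m.+1 -> nat) (sg : {perm 'I_m.+1}) (s : 'I_m.+1 -> nat)
  (j : 'I_m.+1) : nat :=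
  (s (sg j) - (if nat_of_ord j is k.+1 then s (sg (inord k)) + (g (sg (inord k))).+1 else 0))%N.

Lemma Ed_le m (g : 'I_m.+1 -> nat) (sg : {perm 'I_m.+1}) s j : (Ed g sg s j <= s (sg j))%N.
Proof. exact: leq_subr. Qed.

Lemma pos_Ed m (g : 'I_m.+1 -> nat) (sg : {perm 'I_m.+1}) s :
  intervals_disjoint g s ->
  (forall k l : 'I_m.+1, (k < l)%N -> (s (sg k) < s (sg l))%N) ->
  forall k, (k < m.+1)%N -> pos g sg (Ed g sg s) k = s (sg (inord k)).
Proof.
move=> D S; elim => [|k IH] Hk.
  by rewrite /pos big_nat1 big_geq // addn0 /Ed inordK //= subn0.
rewrite pos_rec IH ?(ltnW Hk) //.
rewrite /Ed inordK //=.
have kk : ((inord k : 'I_m.+1) < (inord k.+1 : 'I_m.+1))%N.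
  by rewrite !inordK // (ltnW Hk).
have ne : sg (inord k) != sg (inord k.+1).
  by rewrite (inj_eq (@perm_inj _ _)); apply/eqP => /(congr1 val) /= E; move: kk; rewrite E ltnn.
have := disj_gap D ne => /orP [] H.
  by rewrite subnKC // addnS.
by have := ltn_trans (leq_ltn_trans (leq_addr _ _) H) (S _ _ kk); rewrite ltnn.
Qed.

Lemma Phi_Ed m (g : 'I_m.+1 -> nat) (sg : {perm 'I_m.+1}) s :
  intervals_disjoint g s ->
  (forall k l : 'I_m.+1, (k < l)%N -> (s (sg k) < s (sg l))%N) ->
  forall i, Phi g sg (Ed g sg s) i = s i.
Proof.
by move=> D S i; rewrite /Phi pos_Ed // inord_val permKV.
Qed.

Lemma Phi_sg m (g : 'I_m.+1 -> nat) (sg : {perm 'I_m.+1}) (e : 'I_m.+1 -> nat) (k : 'I_m.+1) : Phi g sg e (sg k) = pos g sg e k.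
Proof. by rewrite /Phi permK. Qed.

Lemma Ed_Phi m (g : 'I_m.+1 -> nat) (sg : {perm 'I_m.+1}) (e : 'I_m.+1 -> nat) j : Ed g sg (Phi g sg e) j = e j.
Proof.
rewrite /Ed; case: j => [[|k] Hk] /=.
  rewrite Phi_sg /pos big_nat1 big_geq // addn0 subn0.
  by congr e; apply: val_inj; rewrite /= inordK.
rewrite !Phi_sg inordK ?(ltnW Hk) // pos_rec addKn.
by congr e; apply: val_inj; rewrite /= inordK.
Qed.

Lemma card_ltk n k : (k <= n)%N -> #|[set l : 'I_n | (l < k)%N]| = k.
Proof.
move=> kn; rewrite -sum1_card.
rewrite (eq_bigl (fun l : 'I_n => true && (l < k)%N)); last by move=> l; rewrite inE.
by rewrite (@big_ord_narrow_cond _ _ _ k n (fun _ => true) (fun _ => 1%N) kn) sum1_card card_ord.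
Qed.

Lemma rank_Phi m (g : 'I_m.+1 -> nat) (sg : {perm 'I_m.+1}) (e : 'I_m.+1 -> nat) i : rank (Phi g sg e) i = (sg^-1)%g i.
Proof.
rewrite /rank.
have -> : [set j | (Phi g sg e j < Phi g sg e i)%N] = (sg^-1)%g @^-1: [set l : 'I_m.+1 | (l < (sg^-1)%g i)%N].
  by apply/setP => j; rewrite !inE /Phi pos_ltE.
by rewrite card_preimset ?card_ltk //; [apply: ltnW | apply: perm_inj].
Qed.

Lemma Phi_inj m (g : 'I_m.+1 -> nat) (sg tau : {perm 'I_m.+1}) (e f : 'I_m.+1 -> nat) :
  Phi g sg e =1 Phi g tau f -> sg = tau /\ e =1 f.
Proof.
move=> E.
have st : sg = tau.
  apply: invg_inj; apply/permP => i; apply: val_inj.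
  have E1 := rank_Phi g sg e i; have E2 := rank_Phi g tau f i.
  change (nat_of_ord ((sg^-1)%g i) = nat_of_ord ((tau^-1)%g i)); rewrite -E1 -E2.
  by rewrite /rank; apply: eq_card => j; rewrite !inE !E.
split => // j; subst tau.
rewrite -(Ed_Phi g sg e) -(Ed_Phi g sg f) /Ed.
by rewrite !E; case: (val j) => [|k] //; rewrite !E.
Qed.

Lemma tri1 (F : nat -> nat) n :
  (\sum_(0 <= k < n) \sum_(0 <= j < k.+1) F j = \sum_(0 <= j < n) (n - j) * F j)%N.
Proof.
elim: n => [|n IH]; first by rewrite !big_geq.
rewrite big_nat_recr //= IH.
rewrite (@eq_big_nat _ _ _ 0 n.+1 (fun j => (n.+1 - j) * F j)%N
  (fun j => (n - j) * F j + F j)%N); last first.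
  by move=> j /andP [_ jn]; rewrite subSn ?mulSn 1?addnC // -ltnS.
rewrite big_split /=; congr (_ + _)%N; by rewrite big_nat_recr //= subnn mul0n addn0.
Qed.

Lemma tri2 (F : nat -> nat) n :
  (\sum_(0 <= k < n) \sum_(0 <= j < k) F j = \sum_(0 <= j < n) (n - j.+1) * F j)%N.
Proof.
elim: n => [|n IH]; first by rewrite !big_geq.
rewrite big_nat_recr //= IH big_nat_recr //= subnn mul0n addn0.
rewrite -big_split /=; apply: eq_big_nat => j /andP [_ jn].
by rewrite subSS -[(n - j)%N](subnSK jn) mulSn addnC.
Qed.

Lemma ord_nat_sum n (F : nat -> nat) :
  (\sum_(j < n) F j = \sum_(0 <= j < n) F j)%N.
Proof. by rewrite big_mkord. Qed.

Lemma sum_pos m (g : 'I_m.+1 -> nat) (sg : {perm 'I_m.+1}) (e : 'I_m.+1 -> nat) :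
  (\sum_(k < m.+1) (pos g sg e k).+1 =
   m.+1 + \sum_(j < m.+1) (m.+1 - j) * e j + \sum_(j < m.+1) (m - j) * (g (sg j)).+1)%N.
Proof.
have E1 : (\sum_(j < m.+1) (m.+1 - j) * e j = \sum_(0 <= j < m.+1) (m.+1 - j) * e (inord j))%N.
  rewrite big_mkord.
  by apply: eq_bigr => j _; rewrite inord_val.
have E2 : (\sum_(j < m.+1) (m - j) * (g (sg j)).+1 = \sum_(0 <= j < m.+1) (m.+1 - j.+1) * (g (sg (inord j))).+1)%N.
  rewrite big_mkord.
  by apply: eq_bigr => j _; rewrite inord_val subSS.
rewrite E1 E2 -(big_mkord xpredT (fun k => (pos g sg e k).+1)).
rewrite -tri1 -tri2 /pos.
rewrite (eq_bigr (fun k => 1 + (\sum_(0 <= j < k.+1) e (inord j) + \sum_(0 <= j < k) (g (sg (inord j))).+1))%N) //.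
rewrite !big_split /= -addnA; congr (_ + _)%N.
by rewrite sum_nat_const_nat subn0 muln1.
Qed.

Definition r : rat := (2%:R)^-1.

Lemma mass_Phi m (g : 'I_m.+1 -> nat) (sg : {perm 'I_m.+1}) (e : 'I_m.+1 -> nat) :
  mass (Phi g sg e) = r ^+ (m.+1 + \sum_(j < m.+1) (m - j) * (g (sg j)).+1)%N *
     \prod_(j < m.+1) (r ^+ (m.+1 - j)) ^+ e j.
Proof.
rewrite /mass (reindex_inj (@perm_inj _ sg)) /=.
under eq_bigr => k _ do rewrite Phi_sg -exprVn.
rewrite prodrXr.
under [X in _ = _ * X]eq_bigr => j _ do rewrite -exprM.
rewrite prodrXr -exprD sum_pos /r; congr (_ ^+ _).
by rewrite addnAC.
Qed.

Definition Csg m (g : 'I_m.+1 -> nat) (sg : {perm 'I_m.+1}) : rat :=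
  r ^+ (m.+1 + \sum_(j < m.+1) (m - j) * (g (sg j)).+1)%N.
Definition q m (j : 'I_m.+1) : rat := r ^+ (m.+1 - j).

Lemma sumW m (g : 'I_m.+1 -> nat) B :
  \sum_(x : {perm 'I_m.+1} * {ffun 'I_m.+1 -> 'I_B})
      mass (Phi g x.1 (fun j => nat_of_ord (x.2 j)))
  = \sum_(sg : {perm 'I_m.+1}) Csg g sg * \prod_(j < m.+1) \sum_(t < B) q j ^+ t.
Proof.
rewrite -(pair_big xpredT xpredT (fun sg (e : {ffun 'I_m.+1 -> 'I_B}) =>
   mass (Phi g sg (fun j => nat_of_ord (e j))))) /=.
apply: eq_bigr => sg _.
rewrite bigA_distr_bigA mulr_sumr; apply: eq_bigr => e _.
by rewrite mass_Phi.
Qed.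

Lemma sum_sub (Y : finType) (P Q : pred Y) (f : Y -> rat) :
  (forall y, P y -> Q y) -> (forall y, 0 <= f y) ->
  \sum_(y | P y) f y <= \sum_(y | Q y) f y.
Proof.
move=> PQ f0; rewrite [X in _ <= X](bigID P) /=.
rewrite (eq_bigl P); last by move=> y; case: (boolP (P y)) => Py; rewrite ?andbF // andbT PQ.
by rewrite lerDl sumr_ge0.
Qed.

Lemma mass_ge0 n (s : 'I_n -> nat) : 0 <= mass s.
Proof. by apply: prodr_ge0 => i _; rewrite invr_ge0 exprn_ge0. Qed.

Lemma pos_bound m (g : 'I_m.+1 -> nat) sg (e : 'I_m.+1 -> nat) B G k :
  (forall j, e j <= B)%N -> (forall i, (g i).+1 <= G)%N -> (k <= m)%N ->
  (pos g sg e k <= m.+1 * B + m.+1 * G)%N.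
Proof.
move=> He Hg km; rewrite /pos; apply: leq_add.
  have H : (\sum_(0 <= j < k.+1) e (inord j) <= \sum_(0 <= j < k.+1) B)%N.
    by apply: leq_sum => j _; exact: He.
  by apply: (leq_trans H); rewrite sum_nat_const_nat subn0 leq_mul.
have H : (\sum_(0 <= j < k) (g (sg (inord j))).+1 <= \sum_(0 <= j < k) G)%N.
  by apply: leq_sum => j _; exact: Hg.
by apply: (leq_trans H); rewrite sum_nat_const_nat subn0 leq_mul // ltnW.
Qed.

Definition hmap m (g : 'I_m.+1 -> nat) B K
  (x : {perm 'I_m.+1} * {ffun 'I_m.+1 -> 'I_B}) : {ffun 'I_m.+1 -> 'I_K.+1} :=
  [ffun i => inord (Phi g x.1 (fun j => nat_of_ord (x.2 j)) i)].

Lemma hmapE m (g : 'I_m.+1 -> nat) B K (x : {perm 'I_m.+1} * {ffun 'I_m.+1 -> 'I_B}) :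
  (forall i, Phi g x.1 (fun j => nat_of_ord (x.2 j)) i < K.+1)%N ->
  (fun i => nat_of_ord (hmap g K x i)) = Phi g x.1 (fun j => nat_of_ord (x.2 j)).
Proof.
by move=> H; apply: functional_extensionality => i; rewrite ffunE inordK.
Qed.

Lemma hmap_inj m (g : 'I_m.+1 -> nat) B K
  (A : {pred {perm 'I_m.+1} * {ffun 'I_m.+1 -> 'I_B}}) :
  (forall x, x \in A -> forall i, Phi g x.1 (fun j => nat_of_ord (x.2 j)) i < K.+1)%N ->
  {in A &, injective (hmap g K)}.
Proof.
move=> HA x y xA yA E.
have E' : Phi g x.1 (fun j => nat_of_ord (x.2 j)) =1 Phi g y.1 (fun j => nat_of_ord (y.2 j)).
  by move=> i; rewrite -(hmapE (HA x xA)) -(hmapE (HA y yA)) E.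
case: (Phi_inj E') => E1 E2.
case: x y {xA yA E E'} E1 E2 => [s1 e1] [s2 e2] /= -> E2; congr pair.
by apply/ffunP => j; apply: val_inj; apply: E2.
Qed.

Lemma lower m (g : 'I_m.+1 -> nat) B K G :
  (forall i, (g i).+1 <= G)%N -> (m.+1 * B + m.+1 * G <= K)%N ->
  \sum_(x : {perm 'I_m.+1} * {ffun 'I_m.+1 -> 'I_B})
      mass (Phi g x.1 (fun j => nat_of_ord (x.2 j))) <= probA_partial g K.+1.
Proof.
move=> HG HK.
have Hb : forall x : {perm 'I_m.+1} * {ffun 'I_m.+1 -> 'I_B}, x \in [set: _] ->
    forall i, (Phi g x.1 (fun j => nat_of_ord (x.2 j)) i < K.+1)%N.
  move=> x _ i; rewrite ltnS; apply: leq_trans HK.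
  apply: pos_bound => //; first by move=> j; apply: ltnW.
  by rewrite -ltnS.
have -> : \sum_(x : {perm 'I_m.+1} * {ffun 'I_m.+1 -> 'I_B})
      mass (Phi g x.1 (fun j => nat_of_ord (x.2 j))) =
   \sum_(y in hmap g K @: [set: {perm 'I_m.+1} * {ffun 'I_m.+1 -> 'I_B}])
      mass (fun i => nat_of_ord (y i)).
  rewrite big_imset /=; last exact: hmap_inj.
  rewrite [RHS](eq_bigl xpredT); last by move=> x; rewrite inE.
  by apply: eq_bigr => x _; rewrite hmapE // => i; apply: Hb; rewrite inE.
rewrite /probA_partial; apply: sum_sub; last by move=> y; apply: mass_ge0.
move=> y /imsetP [x _ ->]; rewrite hmapE; first exact: Phi_disj.
by move=> i; apply: Hb; rewrite inE.
Qed.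

Lemma upper m (g : 'I_m.+1 -> nat) K :
  probA_partial g K.+1 <=
  \sum_(x : {perm 'I_m.+1} * {ffun 'I_m.+1 -> 'I_K.+1})
      mass (Phi g x.1 (fun j => nat_of_ord (x.2 j))).
Proof.
pose A := [set x : {perm 'I_m.+1} * {ffun 'I_m.+1 -> 'I_K.+1} |
   [forall i, (Phi g x.1 (fun j => nat_of_ord (x.2 j)) i < K.+1)%N]].
have HA : forall x, x \in A -> forall i, (Phi g x.1 (fun j => nat_of_ord (x.2 j)) i < K.+1)%N.
  by move=> x; rewrite inE => /forallP.
apply: (@le_trans _ _ (\sum_(y in hmap g K @: A) mass (fun i => nat_of_ord (y i)))).
  rewrite /probA_partial; apply: sum_sub; last by move=> y; apply: mass_ge0.
  move=> y D.
  have [sg S] := sortP (disj_inj D).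
  pose e : {ffun 'I_m.+1 -> 'I_K.+1} := [ffun j => inord (Ed g sg (fun i => nat_of_ord (y i)) j)].
  have ee : (fun j => nat_of_ord (e j)) = Ed g sg (fun i => nat_of_ord (y i)).
    apply: functional_extensionality => j; rewrite ffunE inordK // ltnS.
    by apply: leq_trans (Ed_le _ _ _ _) _; rewrite -ltnS.
  have Hx : (sg, e) \in A.
    by rewrite inE; apply/forallP => i /=; rewrite ee Phi_Ed.
  apply/imsetP; exists (sg, e) => //.
  by apply/ffunP => i; rewrite /hmap ffunE /= ee Phi_Ed // inord_val.
rewrite big_imset /=; last exact: hmap_inj.
rewrite (eq_bigr (fun x : {perm 'I_m.+1} * {ffun 'I_m.+1 -> 'I_K.+1} => mass (Phi g x.1 (fun j => nat_of_ord (x.2 j))))); last first.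
  by move=> x xA; rewrite hmapE //; apply: HA.
by apply: sum_sub => // x; apply: mass_ge0.
Qed.

Lemma r_gt0 : 0 < r. Proof. by rewrite /r invr_gt0 ltr0n. Qed.
Lemma r_lt1 : r < 1. Proof. by vm_compute. Qed.
Lemma r_le1 : r <= 1. Proof. exact: ltW r_lt1. Qed.
Lemma r_ge0 : 0 <= r. Proof. exact: ltW r_gt0. Qed.

Lemma q_gt0 m (j : 'I_m.+1) : 0 < q j. Proof. by rewrite /q exprn_gt0 // r_gt0. Qed.
Lemma q_le_r m (j : 'I_m.+1) : q j <= r.
Proof. by rewrite /q ler_iXnr ?subn_gt0 ?r_ge0 ?r_le1. Qed.
Lemma q_lt1 m (j : 'I_m.+1) : q j < 1. Proof. exact: le_lt_trans (q_le_r j) r_lt1. Qed.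

Lemma geoE m (j : 'I_m.+1) B : \sum_(t < B) q j ^+ t = (1 - q j ^+ B) / (1 - q j).
Proof.
have h : 1 - q j != 0.
  rewrite subr_eq0; apply/eqP => E; have := q_lt1 j; by rewrite -E ltxx.
apply: (mulfI h); rewrite [RHS]mulrC divfK //.
by rewrite -opprB mulNr -subrX1 opprB.
Qed.

Lemma prod_le (I : Type) (s : seq I) (a : I -> rat) :
  (forall i, 0 <= a i <= 1) ->
  1 - \prod_(i <- s) (1 - a i) <= \sum_(i <- s) a i.
Proof.
move=> Ha; elim: s => [|x s IH]; first by rewrite !big_nil subrr.
rewrite !big_cons.
set P := \prod_(i <- s) (1 - a i).
have P0 : 0 <= P by apply: prodr_ge0 => i _; rewrite subr_ge0; case/andP: (Ha i).
have P1 : P <= 1.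
  apply: prodr_ile1 => i _; rewrite subr_ge0 gerBl; case/andP: (Ha i) => -> ->; done.
have -> : 1 - (1 - a x) * P = (1 - P) + a x * P.
  by rewrite mulrBl mul1r opprB addrCA addrC.
rewrite addrC; apply: lerD => //.
by apply: ler_piMr => //; case/andP: (Ha x).
Qed.

Definition Qj m (j : 'I_m.+1) : rat := (1 - q j)^-1.
Definition Lim m (g : 'I_m.+1 -> nat) : rat :=
  \sum_(sg : {perm 'I_m.+1}) Csg g sg * \prod_(j < m.+1) Qj j.
Definition SB m (g : 'I_m.+1 -> nat) B : rat :=
  \sum_(sg : {perm 'I_m.+1}) Csg g sg * \prod_(j < m.+1) \sum_(t < B) q j ^+ t.

Lemma Qj_ge0 m (j : 'I_m.+1) : 0 <= Qj j.
Proof. by rewrite /Qj invr_ge0 subr_ge0 ltW // q_lt1. Qed.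

Lemma Csg_ge0 m (g : 'I_m.+1 -> nat) sg : 0 <= Csg g sg.
Proof. by rewrite /Csg exprn_ge0 // r_ge0. Qed.

Lemma geo_bounds m (j : 'I_m.+1) B : 0 <= \sum_(t < B) q j ^+ t <= Qj j.
Proof.
apply/andP; split.
  by apply: sumr_ge0 => t _; rewrite exprn_ge0 // ltW // q_gt0.
rewrite geoE ler_piMl ?Qj_ge0 //.
by rewrite gerBl exprn_ge0 // ltW // q_gt0.
Qed.

Lemma SB_le m (g : 'I_m.+1 -> nat) B : SB g B <= Lim g.
Proof.
apply: ler_sum => sg _; apply: ler_wpM2l; first exact: Csg_ge0.
by apply: ler_prod => j _; apply: geo_bounds.
Qed.

Lemma Lim_ge0 m (g : 'I_m.+1 -> nat) : 0 <= Lim g.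
Proof.
apply: sumr_ge0 => sg _; apply: mulr_ge0; first exact: Csg_ge0.
by apply: prodr_ge0 => j _; apply: Qj_ge0.
Qed.

Lemma Lim_SB m (g : 'I_m.+1 -> nat) B :
  Lim g - SB g B <= Lim g * (m.+1%:R * r ^+ B).
Proof.
rewrite /Lim /SB -sumrB mulr_suml; apply: ler_sum => sg _.
rewrite -mulrBr -mulrA; apply: ler_wpM2l; first exact: Csg_ge0.
have -> : \prod_(j < m.+1) \sum_(t < B) q j ^+ t =
   (\prod_(j < m.+1) (1 - q j ^+ B)) * \prod_(j < m.+1) Qj j.
  by rewrite -big_split /=; apply: eq_bigr => j _; rewrite geoE.
rewrite -{1}[\prod_(j < m.+1) Qj j]mul1r -mulrBl mulrC.
apply: ler_wpM2l; first by apply: prodr_ge0 => j _; apply: Qj_ge0.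
apply: (le_trans (prod_le _ _)).
  move=> j; rewrite exprn_ge0 ?exprn_ile1 // ?ltW ?q_gt0 ?q_lt1 //.
apply: (@le_trans _ _ (\sum_(j < m.+1) r ^+ B)).
  apply: ler_sum => j _; rewrite /q -exprM.
  by apply: ler_wiXn2l; rewrite ?r_ge0 ?r_le1 // leq_pmull // subn_gt0.
by rewrite sumr_const card_ord mulr_natl.
Qed.

Lemma rB_le B : (0 < B)%N -> r ^+ B <= (B%:R)^-1.
Proof.
move=> B0; rewrite /r exprVn lef_pV2 ?posrE ?ltr0n ?exprn_gt0 //.
by rewrite -natrX ler_nat ltnW // ltn_expl.
Qed.

Lemma conv m (g : 'I_m.+1 -> nat) : converges_to (probA_partial g) (Lim g).
Proof.
move=> eps eps0.
have L0 := Lim_ge0 g.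
pose M := Lim g * m.+1%:R / eps.
have M0 : 0 <= M.
  by apply: divr_ge0; [apply: mulr_ge0 => //; apply: ler0n | apply: ltW].
pose B := Num.bound M.
have MB : M < B%:R := archi_boundP M0.
have B0 : (0 < B)%N by rewrite /B /Num.bound.
pose G := (\max_(i : 'I_m.+1) (g i).+1)%N.
have HG : forall i, ((g i).+1 <= G)%N by move=> i; exact: (@leq_bigmax _ (fun i => (g i).+1) i).
exists (m.+1 * B + m.+1 * G).+1 => [[|K]] // HK.
rewrite ltnS in HK.
have lo := lower HG HK; rewrite sumW in lo.
have up := upper g K; rewrite sumW in up.
have up' : probA_partial g K.+1 <= Lim g by apply: le_trans up (SB_le _ _).
rewrite ler0_norm ?subr_le0 // opprB.
apply: (le_lt_trans (lerB (lexx _) lo)).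
apply: (le_lt_trans (Lim_SB _ _)).
apply: (@le_lt_trans _ _ (Lim g * m.+1%:R / B%:R)).
  by rewrite -mulrA ler_wpM2l ?mulr_ge0 // ler_wpM2l // rB_le.
rewrite ltr_pdivrMr ?ltr0n // mulrC.
by move: MB; rewrite /M ltr_pdivrMr // mulrC [(eps * _)]mulrC.
Qed.

Lemma r2 k : (2%:R : rat) ^- k = r ^+ k.
Proof. by rewrite /r exprVn. Qed.

Lemma r1 : 1 - r = r. Proof. by apply/eqP; vm_compute. Qed.
Lemma rr : r * r + r * r = r. Proof. by apply/eqP; vm_compute. Qed.

Lemma prodQ m : \prod_(j < m.+1) Qj j = c m.+1.
Proof.
rewrite /Qj prodfV /c /q.
rewrite -(big_mkord xpredT (fun j => 1 - r ^+ (m.+1 - j))).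
rewrite big_nat_recr //= subSnn expr1 r1.
rewrite big_add1 /=.
rewrite [in RHS](eq_bigr (fun i => 1 - r ^+ (m.+1 - i))); last by move=> i _; rewrite subSS r2.
by rewrite invfM mulrC /r invrK.
Qed.

Lemma sum_rev m : (\sum_(j < m.+1) (m - j) = 'C(m.+1, 2))%N.
Proof.
rewrite (reindex_inj rev_ord_inj) /=.
rewrite (eq_bigr (fun j : 'I_m.+1 => nat_of_ord j)); last first.
  by move=> j _; rewrite subSS subKn // -ltnS.
by rewrite -(big_mkord xpredT (fun j => j)) bin2_sum.
Qed.

Lemma Csg_eq m (g : 'I_m.+1 -> nat) sg :
  Csg g sg = (2%:R : rat) ^- 'C(m.+2, 2) *
     \prod_(i : 'I_m.+1 | (i.+1 < m.+1)%N) (2%:R : rat) ^- ((m.+1 - i.+1) * g (sg i)).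
Proof.
rewrite r2 big_mkcond /=.
rewrite (eq_bigr (fun i : 'I_m.+1 => r ^+ ((m - i) * g (sg i)))); last first.
  move=> i _; rewrite subSS; case: ifP => [_|]; first by rewrite r2.
  rewrite ltnS => H; have -> : (m - i = 0)%N by apply/eqP; rewrite subn_eq0 leqNgt H.
  by rewrite mul0n expr0.
rewrite prodrXr -exprD /Csg; congr (_ ^+ _).
rewrite [in LHS](eq_bigr (fun j : 'I_m.+1 => (m - j) * g (sg j) + (m - j))%N); last first.
  by move=> j _; rewrite mulnSr.
rewrite big_split /= addnCA [LHS]addnC; congr (_ + _)%N.
by rewrite sum_rev [RHS]binS bin1 addnC.
Qed.

Lemma Lim_eq m (g : 'I_m.+1 -> nat) :
  Lim g = c m.+1 * (2%:R : rat) ^- 'C(m.+2, 2) *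
     \sum_(sg : {perm 'I_m.+1}) \prod_(i : 'I_m.+1 | (i.+1 < m.+1)%N)
        (2%:R : rat) ^- ((m.+1 - i.+1) * g (sg i)).
Proof.
rewrite /Lim prodQ -mulrA mulr_sumr mulr_sumr.
by apply: eq_bigr => sg _; rewrite Csg_eq mulrC.
Qed.

Lemma sumS n : \sum_(1 <= i < n.+1) r ^+ (n.+2 - i) = r - r ^+ n.+1.
Proof.
elim: n => [|n IH]; first by rewrite big_geq // expr1 subrr.
rewrite big_nat_recr //=.
rewrite (eq_big_nat _ _ (F2 := fun i => r * r ^+ (n.+2 - i))); last first.
  by move=> i /andP [_ H]; rewrite -exprS -subSn // leqW // ltnW.
rewrite -mulr_sumr IH.
have -> : (n.+3 - n.+1 = 2)%N by rewrite subSS -addn2 addKn.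
by rewrite mulrBr -exprS expr2 addrAC rr.
Qed.

Lemma Pc_bounds n : r <= \prod_(1 <= i < n) (1 - (2%:R : rat) ^- (n.+1 - i)) <= 1.
Proof.
apply/andP; split; last first.
  apply: prodr_ile1 => i _; rewrite r2 subr_ge0 gerBl exprn_ge0 ?r_ge0 //.
  by rewrite exprn_ile1 ?r_ge0 ?r_le1.
rewrite -{1}r1 lerBlDr -lerBlDl.
(* goal : 1 - P <= r *)
apply: le_trans (prod_le _ _) _.
  by move=> i; rewrite r2 exprn_ge0 ?r_ge0 ?exprn_ile1 ?r_ge0 ?r_le1.
case: n => [|n]; first by rewrite big_geq ?r_ge0.
rewrite (eq_bigr (fun i => r ^+ (n.+2 - i))); last by move=> i _; rewrite r2.
by rewrite sumS gerDl oppr_le0 exprn_ge0 ?r_ge0.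
Qed.

Lemma c_bounds n : (2%:R : rat) <= c n <= 4%:R.
Proof.
have /andP [rP P1] := Pc_bounds n.
have P0 : 0 < \prod_(1 <= i < n) (1 - (2%:R : rat) ^- (n.+1 - i)) := lt_le_trans r_gt0 rP.
rewrite /c; apply/andP; split.
  by rewrite ler_pdivlMr // ler_piMr.
rewrite ler_pdivrMr //.
apply: le_trans (ler_wpM2l _ rP); last by [].
by vm_compute.
Qed.

Lemma c2 : c 2 = 8%:R / 3%:R.
Proof. rewrite /c big_nat1. by apply/eqP; vm_compute. Qed.

Theorem corollary1 :
  (forall (n : nat) (gamma : 'I_n -> nat), (1 <= n)%N ->
     converges_to (probA_partial gamma)
       (c n * (2%:R : rat) ^- 'C(n.+1, 2) *
        \sum_(sigma : 'S_n)
           \prod_(i : 'I_n | (i.+1 < n)%N)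
              (2%:R : rat) ^- ((n - i.+1) * gamma (sigma i))))
  /\ (forall n : nat, (2%:R : rat) <= c n <= 4%:R)
  /\ c 2 = 8%:R / 3%:R.
Proof.
split; last by split; [exact: c_bounds | exact: c2].
move=> [|m] g // _.
rewrite -Lim_eq; exact: conv.
Qed.
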